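(* Let $X$ be a finite connected poset, $F$ a field with $\mathrm{char}(F)=2$, and $\varphi$ a Lie automorphism of $I(X,F)$. The following are equivalent: (1) $\varphi(f^2)=\varphi(f)^2$ for all $f\in I(X,F)$; (2) $\varphi(E(I(X,F)))\subseteq E(I(X,F))$; (3) $\varphi(e_x)$ is an idempotent for every $x\in X$.
   Context: $I(X,F)$ is the incidence algebra of the locally finite poset $X$ over $F$ (functions $f:X\times X\to F$ vanishing unless $x\le y$, with product $(fg)(x,y)=\sum_{x\le z\le y}f(x,z)g(z,y)$). For $x\le y$, $e_{xy}\in I(X,F)$ is the function equal to $1$ at $(x,y)$ and $0$ elsewhere, and $e_x:=e_{xx}$. A poset is connected if any two elements are joined by a finite sequence of elements in which consecutive elements are comparable. $E(A)$ denotes the idempotents of $A$. In characteristic $2$, a Lie automorphism of $I(X,F)$ is a bijective $F$-linear map $\varphi$ with $\varphi(ab+ba)=\varphi(a)\varphi(b)+\varphi(b)\varphi(a)$ for all $a,b$. *)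

(* Defs.v *)
From HB Require Import structures.
From mathcomp Require Import all_boot all_order all_algebra.
Set Implicit Arguments. Unset Strict Implicit. Unset Printing Implicit Defensive.
Import GRing.Theory.
Local Open Scope ring_scope.

Definition is_partial_order (T : finType) (le : rel T) : Prop :=
  [/\ reflexive le, antisymmetric le & transitive le].

Definition poset_connected (T : finType) (le : rel T) : Prop :=
  forall x y : T, exists s : seq T,
    path (fun a b => le a b || le b a) x s /\ last x s = y.

(* Incidence algebra I(X,F): functions f : T * T -> F vanishing unless x <= y. *)
Record incalg (T : finType) (le : rel T) (F : fieldType) := IncAlg {
  ifun :> {ffun T * T -> F};
  _ : [forall p : T * T, ~~ le p.1 p.2 ==> (ifun p == 0)]
}.

Lemma IncAlg_prop (T : finType) (le : rel T) (F : fieldType) (f : incalg le F) :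
  [forall p : T * T, ~~ le p.1 p.2 ==> ((f : {ffun _ -> _}) p == 0)].
Proof. by case: f. Qed.

Section Ops.
Variables (T : finType) (le : rel T) (F : fieldType).

Lemma inc_add_proof (f g : incalg le F) :
  [forall p : T * T, ~~ le p.1 p.2 ==>
     ([ffun p => (f : {ffun _ -> _}) p + g p] p == 0)].
Proof.
have /forallP Hf := IncAlg_prop f; have /forallP Hg := IncAlg_prop g.
apply/forallP => p; apply/implyP => Hp; rewrite ffunE /=.
by rewrite (eqP (implyP (Hf p) Hp)) (eqP (implyP (Hg p) Hp)) addr0.
Qed.
Definition inc_add (f g : incalg le F) : incalg le F := IncAlg (inc_add_proof f g).

Lemma inc_scale_proof (c : F) (f : incalg le F) :
  [forall p : T * T, ~~ le p.1 p.2 ==> ([ffun p => c * (f : {ffun _ -> _}) p] p == 0)].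
Proof.
have /forallP Hf := IncAlg_prop f; apply/forallP => p; apply/implyP => Hp.
by rewrite ffunE /= (eqP (implyP (Hf p) Hp)) mulr0.
Qed.
Definition inc_scale (c : F) (f : incalg le F) : incalg le F :=
  IncAlg (inc_scale_proof c f).

Definition inc_mul_fun (f g : incalg le F) : {ffun T * T -> F} :=
  [ffun p => \sum_(z : T | le p.1 z && le z p.2)
               (f : {ffun _ -> _}) (p.1, z) * (g : {ffun _ -> _}) (z, p.2)].

Hypothesis le_trans : transitive le.

Lemma inc_mul_proof (f g : incalg le F) :
  [forall p : T * T, ~~ le p.1 p.2 ==> (inc_mul_fun f g p == 0)].
Proof.
apply/forallP => p; apply/implyP => Hp; rewrite ffunE big_pred0 //.
move=> z; apply/negP => /andP[H1 H2]; by rewrite (le_trans H1 H2) in Hp.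
Qed.
Definition inc_mul (f g : incalg le F) : incalg le F := IncAlg (inc_mul_proof f g).

End Ops.

Definition inc_idempotent (T : finType) (le : rel T) (F : fieldType)
  (le_trans : transitive le) (f : incalg le F) : Prop :=
  inc_mul le_trans f f = f.

Lemma inc_ex_proof (T : finType) (le : rel T) (F : fieldType)
  (le_refl : reflexive le) (x : T) :
  [forall p : T * T, ~~ le p.1 p.2 ==>
     ([ffun p : T * T => if p == (x, x) then (1 : F) else 0] p == 0)].
Proof.
apply/forallP => -[a b]; apply/implyP => Hp; rewrite ffunE /=.
case: ifP => [/eqP [Ha Hb]|_]; [by rewrite Ha Hb le_refl in Hp | by []].
Qed.
Definition inc_ex (T : finType) (le : rel T) (F : fieldType)
  (le_refl : reflexive le) (x : T) : incalg le F := IncAlg (inc_ex_proof F le_refl x).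

(* Lie automorphism in characteristic 2: bijective F-linear map preserving
   the Jordan/Lie product ab + ba. *)
Definition lie_automorphism_char2 (T : finType) (le : rel T) (F : fieldType)
  (le_trans : transitive le) (phi : incalg le F -> incalg le F) : Prop :=
  [/\ forall f g, phi (inc_add f g) = inc_add (phi f) (phi g),
      forall (c : F) f, phi (inc_scale c f) = inc_scale c (phi f),
      bijective phi &
      forall a b, phi (inc_add (inc_mul le_trans a b) (inc_mul le_trans b a)) =
                  inc_add (inc_mul le_trans (phi a) (phi b))
                          (inc_mul le_trans (phi b) (phi a))].

(* Main.v *)
Require Import Defs.
From HB Require Import structures.
From mathcomp Require Import all_boot all_order all_algebra.
From mathcomp Require Import ring.
Set Implicit Arguments. Unset Strict Implicit. Unset Printing Implicit Defensive.
Import GRing.Theory.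
Local Open Scope ring_scope.

Section Helpers.
Variables (T : finType) (le : rel T) (F : fieldType).
Hypotheses (le_refl : reflexive le) (le_anti : antisymmetric le) (le_trans : transitive le).
Hypothesis Hchar : (2%N \in [pchar F]).

Local Notation I := (incalg le F).
Local Notation add := (@inc_add T le F).
Local Notation scale := (@inc_scale T le F).
Local Notation mul := (inc_mul le_trans).
Local Notation ex := (inc_ex F le_refl).

Lemma eqI (f g : I) : (forall p, f p = g p) -> f = g.
Proof.
case: f => f Hf; case: g => g Hg /= H.
have E : f = g by apply/ffunP.
subst g; by rewrite (bool_irrelevance Hf Hg).
Qed.

Lemma zero_out (f : I) a b : ~~ le a b -> f (a, b) = 0.
Proof.
move=> H; have /forallP/(_ (a, b))/implyP/(_ H)/eqP := IncAlg_prop f; done.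
Qed.

Lemma addE (f g : I) p : add f g p = f p + g p.
Proof. by rewrite /inc_add /= ffunE. Qed.

Lemma scaleE c (f : I) p : scale c f p = c * f p.
Proof. by rewrite /inc_scale /= ffunE. Qed.

Lemma exE x p : ex x p = if p == (x, x) then 1 else 0.
Proof. by rewrite /inc_ex /= ffunE. Qed.

Lemma mulE (f g : I) p : mul f g p = \sum_z f (p.1, z) * g (z, p.2).
Proof.
rewrite /inc_mul /inc_mul_fun /= ffunE [RHS](bigID (fun z => le p.1 z && le z p.2)) /=.
rewrite [X in _ = _ + X]big1 ?addr0 // => z /nandP [] H.
  by rewrite zero_out ?mul0r.
by rewrite (zero_out g) ?mulr0.
Qed.

Lemma mul_diag (f g : I) z : mul f g (z, z) = f (z, z) * g (z, z).
Proof.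
rewrite mulE (bigD1 z) //= big1 ?addr0 // => w Hw.
case Hzw: (le z w); last by rewrite zero_out ?Hzw ?mul0r.
case Hwz: (le w z); last by rewrite (zero_out g) ?Hwz ?mulr0.
by have E := le_anti (introT andP (conj Hzw Hwz)); rewrite E eqxx in Hw.
Qed.

Lemma two0 : (2%:R : F) = 0.
Proof. exact: pcharf0 Hchar. Qed.

Lemma addxx (x : F) : x + x = 0.
Proof. by rewrite -mulr2n -mulr_natr two0 mulr0. Qed.

Lemma mulA (a b c : I) : mul (mul a b) c = mul a (mul b c).
Proof.
apply: eqI => p; rewrite mulE.
under eq_bigr => z _ do rewrite mulE /= big_distrl.
rewrite exchange_big mulE; apply: eq_bigr => w _ /=.
rewrite mulE big_distrr; apply: eq_bigr => z _ /=; by rewrite mulrA.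
Qed.

Lemma mulDl (a b c : I) : mul (add a b) c = add (mul a c) (mul b c).
Proof.
apply: eqI => p; rewrite addE !mulE -big_split; apply: eq_bigr => z _.
by rewrite addE mulrDl.
Qed.

Lemma mulDr (a b c : I) : mul a (add b c) = add (mul a b) (mul a c).
Proof.
apply: eqI => p; rewrite addE !mulE -big_split; apply: eq_bigr => z _.
by rewrite addE mulrDr.
Qed.

Lemma inc0_proof : [forall p : T * T, ~~ le p.1 p.2 ==> ([ffun _ : T * T => (0 : F)] p == 0)].
Proof. by apply/forallP => q; apply/implyP => _; rewrite ffunE. Qed.
Definition inc0 : I := IncAlg inc0_proof.
Lemma inc0E p : inc0 p = 0. Proof. by rewrite /inc0 /= ffunE. Qed.

Lemma inc_e_proof (p : T * T) : [forall q : T * T, ~~ le q.1 q.2 ==>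
   ([ffun q : T * T => if (q == p) && le p.1 p.2 then (1 : F) else 0] q == 0)].
Proof.
apply/forallP => q; apply/implyP => Hq; rewrite ffunE.
by case: (q =P p) => [E|] //=; rewrite -E (negbTE Hq).
Qed.
Definition inc_e p : I := IncAlg (inc_e_proof p).
Lemma eE p q : inc_e p q = if (q == p) && le p.1 p.2 then 1 else 0.
Proof. by rewrite /inc_e /= ffunE. Qed.

Definition jor (a b : I) := add (mul a b) (mul b a).

Lemma sqD (a b : I) : mul (add a b) (add a b) = add (add (mul a a) (mul b b)) (jor a b).
Proof. rewrite mulDl !mulDr; apply: eqI => p; rewrite !addE; ring. Qed.

Lemma sqZ c (a : I) : mul (scale c a) (scale c a) = scale (c ^+ 2) (mul a a).
Proof.
apply: eqI => p; rewrite scaleE !mulE big_distrr; apply: eq_bigr => z _ /=.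
rewrite !scaleE; ring.
Qed.

Lemma add_mid (X Y Z : I) : add (add X Y) (add Y Z) = add X Z.
Proof.
apply: eqI => p; rewrite !addE.
have -> : X p + Z p = X p + Z p + (Y p + Y p) by rewrite addxx addr0.
ring.
Qed.

Lemma jorsq (a b : I) : jor (mul a a) b = jor a (jor a b).
Proof.
rewrite /jor mulDl mulDr !mulA add_mid; done.
Qed.

Lemma jorDl (a b c : I) : jor (add a b) c = add (jor a c) (jor b c).
Proof. rewrite /jor mulDl mulDr; apply: eqI => p; rewrite !addE; ring. Qed.

Lemma addxxI (X : I) : add X X = inc0.
Proof. by apply: eqI => p; rewrite addE inc0E addxx. Qed.

Lemma exE2 x a b : ex x (a, b) = if (a == x) && (b == x) then 1 else 0.
Proof. by rewrite exE xpair_eqE. Qed.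

Lemma ex_idem x : mul (ex x) (ex x) = ex x.
Proof.
apply: eqI => -[a b]; rewrite mulE (bigD1 x) //= big1 ?addr0.
  by rewrite !exE2 eqxx /=; case: (a == x); case: (b == x); rewrite ?mulr1 ?mulr0.
move=> z Hz; by rewrite !exE2 (negbTE Hz) andbF mul0r.
Qed.

Lemma mul_ex_r (f : I) x a b : mul f (ex x) (a, b) = if b == x then f (a, x) else 0.
Proof.
rewrite mulE (bigD1 x) //= big1 ?addr0.
  by rewrite exE2 eqxx /=; case: (b == x); rewrite ?mulr1 ?mulr0.
by move=> z Hz; rewrite exE2 (negbTE Hz) mulr0.
Qed.

Lemma mul_ex_l (f : I) x a b : mul (ex x) f (a, b) = if a == x then f (x, b) else 0.
Proof.
rewrite mulE (bigD1 x) //= big1 ?addr0.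
  by rewrite exE2 eqxx andbT; case: (a == x); rewrite ?mul1r ?mul0r.
by move=> z Hz; rewrite exE2 (negbTE Hz) andbF mul0r.
Qed.

Lemma central_zero (C : I) : (forall g, jor C g = inc0) -> (forall z, C (z, z) = 0) ->
  C = inc0.
Proof.
move=> Hc Hd; apply: eqI => -[a b]; rewrite inc0E.
case: (a =P b) => [->|Hab]; first exact: Hd.
have : jor C (ex b) (a, b) = inc0 (a, b) by rewrite Hc.
by rewrite /jor addE mul_ex_r mul_ex_l eqxx inc0E; move/eqP: Hab => /negbTE ->; rewrite addr0.
Qed.

Lemma sq0 : mul inc0 inc0 = inc0.
Proof. by apply: eqI => p; rewrite mulE big1 ?inc0E // => z _; rewrite inc0E mul0r. Qed.

Variable phi : I -> I.
Hypothesis Hphi : lie_automorphism_char2 le_trans phi.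

Lemma phiD a b : phi (add a b) = add (phi a) (phi b).
Proof. by case: Hphi. Qed.
Lemma phiZ c a : phi (scale c a) = scale c (phi a).
Proof. by case: Hphi. Qed.
Lemma phiJ a b : phi (jor a b) = jor (phi a) (phi b).
Proof. by case: Hphi => _ _ _ H; apply: H. Qed.
Lemma phi_surj g : exists h, g = phi h.
Proof. case: Hphi => _ _ [ginv K1 K2] _; exists (ginv g); by rewrite K2. Qed.
Lemma phi0 : phi inc0 = inc0.
Proof.
have E : inc0 = scale 0 inc0 by apply: eqI => p; rewrite scaleE mul0r inc0E.
rewrite E phiZ; apply: eqI => p; by rewrite !scaleE !mul0r.
Qed.

Definition D f := add (phi (mul f f)) (mul (phi f) (phi f)).

Lemma DD a b : D (add a b) = add (D a) (D b).
Proof.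
rewrite /D sqD phiD phiJ !phiD sqD; move: (jor (phi a) (phi b)) => JJ; apply: eqI => p; rewrite !addE.
set J := JJ p.
have -> : phi (mul a a) p + mul (phi a) (phi a) p + (phi (mul b b) p + mul (phi b) (phi b) p)
  = phi (mul a a) p + mul (phi a) (phi a) p + (phi (mul b b) p + mul (phi b) (phi b) p) + (J + J)
  by rewrite addxx addr0.
ring.
Qed.

Lemma DZ c a : D (scale c a) = scale (c ^+ 2) (D a).
Proof.
rewrite /D sqZ phiZ phiZ sqZ; apply: eqI => p; rewrite !scaleE !addE !scaleE; ring.
Qed.

Lemma D0 : D inc0 = inc0.
Proof. by rewrite /D sq0 phi0 sq0 addxxI. Qed.

Lemma Dcentral f g : jor (D f) g = inc0.
Proof.
have [h ->] := phi_surj g.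
rewrite /D jorDl -phiJ jorsq phiJ phiJ -jorsq; exact: addxxI.
Qed.

Hypothesis H3 : forall x : T, inc_idempotent le_trans (phi (ex x)).

Lemma D_e p : D (inc_e p) = inc0.
Proof.
case: p => x y.
case: (x =P y) => [<-|Hxy].
  have -> : inc_e (x, x) = ex x.
    by apply: eqI => q; rewrite eE exE le_refl andbT.
  by rewrite /D ex_idem (H3 x) addxxI.
case Hle: (le x y); last first.
  have -> : inc_e (x, y) = inc0 by apply: eqI => q; rewrite eE inc0E Hle andbF.
  exact: D0.
have Hsq : mul (inc_e (x, y)) (inc_e (x, y)) = inc0.
  apply: eqI => -[a b]; rewrite mulE inc0E big1 // => z _ /=; rewrite !eE Hle !andbT !xpair_eqE.
  case: (z =P y) => [->|Hzy]; last by rewrite andbF mul0r.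
  by move/eqP: Hxy; rewrite eq_sym => /negbTE ->; rewrite mulr0.
have Hj : jor (ex x) (inc_e (x, y)) = inc_e (x, y).
  apply: eqI => -[a b]; rewrite addE mul_ex_l mul_ex_r !eE Hle !andbT !xpair_eqE eqxx /=.
  have Hxy' : (x == y) = false by apply/eqP.
  by rewrite Hxy' andbF; case: (b == x); rewrite addr0; case: (a == x).
set A := phi (inc_e (x, y)).
have HA : forall z, A (z, z) = 0.
  move=> z; have : phi (jor (ex x) (inc_e (x, y))) (z, z) = jor (phi (ex x)) A (z, z) by rewrite phiJ.
  rewrite Hj /jor addE !mul_diag -/A [X in _ = _ + X]mulrC addxx //.
apply: central_zero; first by move=> g; apply: Dcentral.
by move=> z; rewrite /D addE Hsq phi0 inc0E add0r mul_diag -/A HA mul0r.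
Qed.

Lemma empty_zero (f : I) : [set q | f q != 0] = set0 -> f = inc0.
Proof.
move=> E; apply: eqI => q; rewrite inc0E.
have : q \notin [set q | f q != 0] by rewrite E in_set0.
by rewrite in_set negbK => /eqP.
Qed.

Lemma Dzero f : D f = inc0.
Proof.
move: {2}#|[set q | f q != 0]| (leqnn #|[set q | f q != 0]|) => n.
elim: n f => [|n IH] f Hn.
  have E : [set q | f q != 0] = set0 by apply/eqP; rewrite -cards_eq0 -leqn0.
  by rewrite (empty_zero E) D0.
case: (set_0Vmem [set q | f q != 0]) => [E|[p Hp]].
  by rewrite (empty_zero E) D0.
set f' := add f (scale (f p) (inc_e p)).
have Hf : f = add f' (scale (f p) (inc_e p)).
  by apply: eqI => q; rewrite !addE -addrA addxx addr0.
have Hlep : le p.1 p.2.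
  move: Hp; rewrite in_set; apply: contraR => H.
  by have := zero_out f H; rewrite -surjective_pairing => ->.
have Hsub : [set q | f' q != 0] \subset [set q | f q != 0] :\ p.
  apply/subsetP => q; rewrite !in_set addE scaleE eE Hlep andbT.
  case: (q =P p) => [->|Hqp]; first by rewrite mulr1 addxx eqxx.
  by rewrite mulr0 addr0 in_set1 => ->; rewrite andbT; apply/eqP.
have Hc : (#|[set q | f' q != 0%R]| <= n)%N.
  apply: (leq_trans (subset_leq_card Hsub)).
  move: Hn; rewrite (cardsD1 p) Hp.
  by rewrite add1n ltnS.
rewrite Hf DD DZ (IH _ Hc) D_e.
by apply: eqI => q; rewrite addE scaleE !inc0E mulr0 addr0.
Qed.

Lemma main3 f : phi (mul f f) = mul (phi f) (phi f).
Proof.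
have E := Dzero f; apply: eqI => p.
have : D f p = inc0 p by rewrite E.
rewrite /D addE inc0E => H.
by rewrite -[LHS]addr0 -(addxx (mul (phi f) (phi f) p)) addrA H add0r.
Qed.

End Helpers.

Theorem lemma3p3 (T : finType) (le : rel T) (F : fieldType)
  (le_refl : reflexive le) (le_anti : antisymmetric le) (le_trans : transitive le)
  (Hconn : poset_connected le)
  (Hchar : (2%N \in [pchar F]))
  (phi : incalg le F -> incalg le F)
  (Hphi : lie_automorphism_char2 le_trans phi) :
  [<-> (forall f, phi (inc_mul le_trans f f) = inc_mul le_trans (phi f) (phi f));
       (forall f, inc_idempotent le_trans f -> inc_idempotent le_trans (phi f));
       (forall x : T, inc_idempotent le_trans (phi (inc_ex F le_refl x)))].
Proof.
split; [|split].
- move=> H1 f Hf; rewrite /inc_idempotent -H1; by rewrite Hf.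
- move=> H2 x; apply: H2; exact: ex_idem.
- move=> H3 f; exact: (main3 le_anti Hchar Hphi H3).
Qed.
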